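(* Let $\mathbf{M}_1,\dots,\mathbf{M}_L$ be nonsingular $D\times D$ integer matrices that are pairwise commutative and coprime, and let $\mathbf{R}=\mathbf{M}_1\cdots\mathbf{M}_L\mathbf{U}$ with $\mathbf{U}$ any unimodular matrix (such $\mathbf{R}$ are lcrm's of the $\mathbf{M}_i$). Let $\mathbf{W}_i=\mathbf{M}_1\cdots\mathbf{M}_{i-1}\mathbf{M}_{i+1}\cdots\mathbf{M}_L$. Then there exist integer matrices $\widehat{\mathbf{W}}_i,\mathbf{Q}_i$ with $\mathbf{W}_i\widehat{\mathbf{W}}_i+\mathbf{M}_i\mathbf{Q}_i=\mathbf{I}$, and for any such choice every $\mathbf{m}\in\mathcal{N}(\mathbf{R})$ satisfies $\mathbf{m}=\big\langle\sum_{i=1}^L\mathbf{W}_i\widehat{\mathbf{W}}_i\langle\mathbf{m}\rangle_{\mathbf{M}_i}\big\rangle_{\mathbf{R}}$; in particular $\mathbf{m}\in\mathcal{N}(\mathbf{R})$ is uniquely determined by its remainders.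
   Context: All matrices are $D\times D$ integer matrices; unimodular means integer with determinant $\pm1$. Commuting nonsingular integer matrices are coprime if all their common left (equivalently right) divisors are unimodular, where $\mathbf{A}$ is a left divisor of $\mathbf{M}$ if $\mathbf{A}^{-1}\mathbf{M}$ is integer. An lcrm of $\mathbf{M}_1,\dots,\mathbf{M}_L$ is a nonsingular integer $\mathbf{R}=\mathbf{M}_i\mathbf{P}_i$ (integer $\mathbf{P}_i$, all $i$) such that every such common right multiple equals $\mathbf{R}\mathbf{A}$ for integer $\mathbf{A}$. $\mathcal{N}(\mathbf{M})=\{\mathbf{k}\in\mathbb{Z}^D:\mathbf{k}=\mathbf{M}\mathbf{x},\ \mathbf{x}\in[0,1)^D\}$; $\langle\mathbf{m}\rangle_{\mathbf{M}}$ is the unique $\mathbf{r}\in\mathcal{N}(\mathbf{M})$ with $\mathbf{m}-\mathbf{r}\in\mathbf{M}\mathbb{Z}^D$. *)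

(* Defs.v *)
From HB Require Import structures.
From mathcomp Require Import all_boot all_order all_algebra.
Set Implicit Arguments. Unset Strict Implicit. Unset Printing Implicit Defensive.
Import Order.TTheory GRing.Theory Num.Theory.
Local Open Scope ring_scope.

Definition nonsingular D (M : 'M[int]_D) : Prop := \det M != 0.

Definition unimodular D (A : 'M[int]_D) : Prop := \det A = 1 \/ \det A = -1.

(* A is a left divisor of M: A^{-1} M is an integer matrix, i.e. M = A X
   for some integer X (A is nonsingular whenever M is). *)
Definition left_divisor D (A M : 'M[int]_D) : Prop :=
  nonsingular A /\ exists X : 'M[int]_D, M = A *m X.

Definition mx_coprime D (M1 M2 : 'M[int]_D) : Prop :=
  forall A : 'M[int]_D, left_divisor A M1 -> left_divisor A M2 -> unimodular A.

Definition prodmx D (s : seq 'M[int]_D) : 'M[int]_D := foldr mulmx 1%:M s.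

Definition in_lattice D (M : 'M[int]_D) (v : 'cV[int]_D) : Prop :=
  exists x : 'cV[int]_D, v = M *m x.

Definition int2rat_mx m n (A : 'M[int]_(m, n)) : 'M[rat]_(m, n) :=
  map_mx (fun z : int => z%:~R) A.

(* N(M) = { k in Z^D : k = M x, x in [0,1)^D }.  For nonsingular M the
   vector x = M^{-1} k is rational, so x ranges over rational vectors. *)
Definition in_N D (M : 'M[int]_D) (k : 'cV[int]_D) : Prop :=
  exists x : 'cV[rat]_D, int2rat_mx k = int2rat_mx M *m x /\
    forall i, 0 <= x i 0 /\ x i 0 < 1.

(* r = <m>_M : r in N(M) and m - r in M Z^D (unique such r). *)
Definition is_rem D (M : 'M[int]_D) (m r : 'cV[int]_D) : Prop :=
  in_N M r /\ in_lattice M (m - r).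

Definition Wmx D L (M : 'I_L -> 'M[int]_D) (i : 'I_L) : 'M[int]_D :=
  prodmx [seq M j | j <- enum 'I_L & j != i].

Definition Pmx D L (M : 'I_L -> 'M[int]_D) : 'M[int]_D :=
  prodmx [seq M j | j <- enum 'I_L].

(* Main.v *)
Require Import Defs.
From HB Require Import structures.
From mathcomp Require Import all_boot all_order all_algebra.
From mathcomp Require Import lra zify.
Set Implicit Arguments. Unset Strict Implicit. Unset Printing Implicit Defensive.
Import Order.TTheory GRing.Theory Num.Theory.
Local Open Scope ring_scope.

Lemma Zn_eq0 (n : nat) (x : int) : (1 < n)%N ->
  ((x%:~R : 'Z_n) == 0) = (n %| `|x|)%N.
Proof.
move=> n1; rewrite [x in x%:~R]intEsign intrM rmorphXn /= rmorphN1 mulr_sign.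
have H : ((`|x|%N%:~R : 'Z_n) == 0) = (n %| `|x|)%N.
  rewrite -[_%:~R]/((`|x|%N)%:R) -(inj_eq val_inj) /=.
  by rewrite (val_Zp_nat n1) /dvdn.
by case: (x < 0); rewrite ?oppr_eq0 H.
Qed.

Lemma scal0mx D : (0%:M : 'M[int]_D) = 0.
Proof. by apply/matrixP=> i j; rewrite !mxE mul0rn. Qed.

Lemma adj_comm D (A B : 'M[int]_D) : \det B != 0 -> A *m B = B *m A ->
  \adj B *m A = A *m \adj B.
Proof.
move=> dB AB; apply/eqP; rewrite -subr_eq0.
have: ((\adj B *m A - A *m \adj B) *m B) *m \adj B = 0.
  rewrite !mulmxBl; apply/eqP; rewrite subr_eq0; apply/eqP.
  by rewrite -(mulmxA _ A B) AB mulmxA mul_adj_mx -(mulmxA A) mul_adj_mx scalar_mxC.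
by rewrite -mulmxA mul_mx_adj mul_mx_scalar => /eqP; rewrite scalemx_eq0 (negbTE dB).
Qed.

Lemma key D (A B X Y : 'M[int]_D) (a : 'cV[int]_D) :
  \det B != 0 -> A *m B = B *m A -> A *m X + B *m Y = 1%:M ->
  in_lattice B (A *m a) -> in_lattice B a.
Proof.
move=> dB AB bez [w Hw].
have GA := adj_comm dB AB.
set d := \det B in dB GA *.
set G := \adj B in GA *.
have [n1|n1] := eqVneq `|d|%N 1%N.
  have Bu : B \in unitmx.
    rewrite unitmxE -/d [d]intEsign n1 mulr1; case: (d < 0);
      by rewrite ?expr1 ?expr0 ?unitrN1 ?unitr1.
  by exists (invmx B *m a); rewrite mulKVmx.
set n := `|d|%N.
have n0 : n != 0%N by rewrite absz_eq0.
have n2 : (1 < n)%N by rewrite ltn_neqAle eq_sym n1 lt0n n0.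
pose phi m p (M : 'M[int]_(m, p)) := map_mx (fun z : int => z%:~R : 'Z_n) M.
have phiM : forall m p q (M1 : 'M_(m, p)) (M2 : 'M_(p, q)),
    phi _ _ (M1 *m M2) = phi _ _ M1 *m phi _ _ M2.
  by move=> *; rewrite /phi map_mxM.
have phiD : forall m p (M1 M2 : 'M_(m, p)),
    phi _ _ (M1 + M2) = phi _ _ M1 + phi _ _ M2.
  by move=> *; rewrite /phi map_mxD.
have phid : phi _ _ (d%:M : 'M_D) = 0.
  rewrite /phi map_scalar_mx /=.
  have -> : (d%:~R : 'Z_n) = 0 by apply/eqP; rewrite Zn_eq0.
  by apply/matrixP=> i j; rewrite !mxE mul0rn.
set V := [set phi _ _ G *m y | y : 'cV['Z_n]_D].
have sub1 : V \subset [set phi _ _ A *m v | v in V].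
  apply/subsetP=> v /imsetP [y _ ->].
  apply/imsetP; exists (phi _ _ G *m (phi _ _ X *m y)).
    by apply/imsetP; exists (phi _ _ X *m y).
  rewrite !mulmxA -!phiM -GA.
  have : phi _ _ (G *m (A *m X + B *m Y)) = phi _ _ G by rewrite bez mulmx1.
  rewrite mulmxDr !mulmxA mul_adj_mx -/d phiD [phi _ _ (d%:M *m Y)]phiM.
  by rewrite phid mul0mx addr0 => ->.
have inj : {in V &, injective (mulmx (phi _ _ A))}.
  apply/imset_injP; rewrite eqn_leq leq_imset_card /=.
  exact: subset_leq_card.
have u0 : phi _ _ G *m phi _ _ a = 0.
  apply: inj; first by apply/imsetP; exists (phi _ _ a).
    by apply/imsetP; exists 0; rewrite ?mulmx0.
  rewrite mulmx0 mulmxA -!phiM -GA -mulmxA Hw mulmxA mul_adj_mx.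
  by rewrite phiM phid mul0mx.
have dv : forall i, (d %| (G *m a) i ord0)%Z.
  move=> i; move/matrixP: u0 => /(_ i ord0); rewrite -phiM /phi !mxE => /eqP.
  by rewrite Zn_eq0.
pose z := \col_i ((G *m a) i ord0 %/ d)%Z.
have Gz : G *m a = d *: z.
  apply/matrixP=> i j; rewrite !mxE (ord1 j) mulrC.
  by have := dv i; rewrite !mxE => /divzK ->.
exists z; apply/eqP; rewrite -subr_eq0.
have : d *: (a - B *m z) == 0.
  rewrite scalerBr -mul_scalar_mx -(mul_mx_adj B) -mulmxA -/G Gz.
  by rewrite -scalemxAr subrr.
by rewrite scalemx_eq0 (negbTE dB).
Qed.

Lemma unimod_unit D (C : 'M[int]_D) : unimodular C -> C \in unitmx.
Proof. by rewrite unitmxE => -[->|->]; rewrite ?unitr1 ?unitrN1. Qed.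

Lemma bezout D (A B : 'M[int]_D) : \det A != 0 -> mx_coprime A B ->
  exists X Y, A *m X + B *m Y = 1%:M.
Proof.
move=> dA cop.
have [L Lu [R Ru [d _ E]]] := int_Smith_normal_form (row_mx A B).
pose Dl : 'M[int]_D := \matrix_(i, j) (d`_i *+ (i == j :> nat)).
have ED : (\matrix_(i, j) (d`_i *+ (i == j :> nat)) : 'M_(D, D + D))
     = Dl *m row_mx 1%:M 0.
  rewrite mul_mx_row mulmx1 mulmx0; apply/matrixP=> i j.
  rewrite !mxE; case: splitP => k /= ->; rewrite ?mxE //.
  by rewrite ltn_eqF ?mulr0n // (leq_trans (ltn_ord i) (leq_addr k D)).
set C := L *m Dl. set S := row_mx 1%:M 0 *m R.
have EAB : row_mx A B = C *m S by rewrite E ED !mulmxA.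
move: EAB; rewrite -[S]hsubmxK mul_mx_row => /eq_row_mx [eA eB].
have dC : \det C != 0.
  by apply: contraNneq dA => dC0; rewrite eA det_mulmx dC0 mul0r.
have uC : C \in unitmx.
  apply: unimod_unit; apply: cop; split => //.
    by exists (lsubmx S).
  by exists (rsubmx S).
pose Z := invmx R *m col_mx (invmx C) 0.
exists (usubmx Z), (dsubmx Z).
rewrite -mul_row_col vsubmxK E ED /Z.
rewrite !mulmxA (mulmxK Ru) -/C -(mulmxA C) mul_row_col mul1mx mul0mx addr0.
by rewrite mulmxV.
Qed.

Lemma comm_prod D L (M : 'I_L -> 'M[int]_D) (A : 'M_D) (l : seq 'I_L) :
  (forall j, j \in l -> A *m M j = M j *m A) ->
  A *m prodmx [seq M j | j <- l] = prodmx [seq M j | j <- l] *m A.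
Proof.
elim: l => [|k l IH] H /=; first by rewrite mulmx1 mul1mx.
rewrite /prodmx /= -/(prodmx _) mulmxA H ?mem_head // -!mulmxA IH //.
by move=> j jl; apply: H; rewrite in_cons jl orbT.
Qed.

Lemma det_prod D L (M : 'I_L -> 'M[int]_D) (l : seq 'I_L) :
  (forall j, \det (M j) != 0) -> \det (prodmx [seq M j | j <- l]) != 0.
Proof.
move=> H; elim: l => [|k l IH] /=; first by rewrite det1 oner_neq0.
by rewrite /prodmx /= -/(prodmx _) det_mulmx mulf_neq0.
Qed.

Lemma bez_cons D (A B C X1 Y1 X2 Y2 : 'M[int]_D) :
  A *m X1 + B *m Y1 = 1%:M -> A *m X2 + C *m Y2 = 1%:M -> B *m A = A *m B ->
  exists X Y, A *m X + (B *m C) *m Y = 1%:M.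
Proof.
move=> h1 h2 hBA.
exists (X1 + B *m X2 *m Y1), (Y2 *m Y1).
have eB : B *m Y1 = A *m (B *m X2 *m Y1) + B *m C *m (Y2 *m Y1).
  rewrite !mulmxA -hBA -(mulmxA B A) -(mulmxA B C) -mulmxDl -mulmxDr h2.
  by rewrite mulmx1.
by rewrite -h1 eB mulmxDr addrA.
Qed.

Lemma bez_prod D L (M : 'I_L -> 'M[int]_D) (A : 'M_D) (l : seq 'I_L) :
  (forall j, j \in l -> M j *m A = A *m M j /\
      exists X Y, A *m X + M j *m Y = 1%:M) ->
  exists X Y, A *m X + prodmx [seq M j | j <- l] *m Y = 1%:M.
Proof.
elim: l => [|k l IH] H /=.
  by exists 0, 1%:M; rewrite mulmx0 add0r mulmx1.
have [hc [X1 [Y1 h1]]] := H k (mem_head _ _).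
have [X2 [Y2 h2]] : exists X Y, A *m X + prodmx [seq M j | j <- l] *m Y = 1%:M.
  by apply: IH => j jl; apply: H; rewrite in_cons jl orbT.
rewrite /prodmx /= -/(prodmx _).
exact: bez_cons h1 h2 hc.
Qed.

Lemma prod_pull D L (M : 'I_L -> 'M[int]_D) (l : seq 'I_L) j :
  (forall i k, M i *m M k = M k *m M i) -> j \in l ->
  exists K, prodmx [seq M i | i <- l] = M j *m K.
Proof.
move=> hc; elim: l => [|k l IH] //=.
rewrite in_cons /prodmx /= -/(prodmx _).
have [-> _|nkj /= jl] := eqVneq j k; first by exists (prodmx [seq M i | i <- l]).
have [K ->] := IH jl; exists (M k *m K).
by rewrite !mulmxA hc.
Qed.

Lemma lat_add D (A : 'M[int]_D) u v :
  in_lattice A u -> in_lattice A v -> in_lattice A (u + v).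
Proof. by move=> [x ->] [y ->]; exists (x + y); rewrite mulmxDr. Qed.
Lemma lat_opp D (A : 'M[int]_D) u : in_lattice A u -> in_lattice A (- u).
Proof. by move=> [x ->]; exists (- x); rewrite mulmxN. Qed.
Lemma lat_mul D (A : 'M[int]_D) w : in_lattice A (A *m w).
Proof. by exists w. Qed.
Lemma lat_sum D (A : 'M[int]_D) (I : finType) (P : pred I) (F : I -> 'cV_D) :
  (forall i, P i -> in_lattice A (F i)) -> in_lattice A (\sum_(i | P i) F i).
Proof.
move=> H; apply: (big_ind (in_lattice A)) => //; last exact: lat_add.
by exists 0; rewrite mulmx0.
Qed.
Lemma lat_unit D (A U : 'M[int]_D) v : U \in unitmx ->
  in_lattice A v -> in_lattice (A *m U) v.
Proof. by move=> hU [x ->]; exists (invmx U *m x); rewrite -mulmxA mulKVmx. Qed.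

Lemma int2rat_mul m n p (A : 'M[int]_(m, n)) (B : 'M[int]_(n, p)) :
  int2rat_mx (A *m B) = int2rat_mx A *m int2rat_mx B.
Proof. by rewrite /int2rat_mx map_mxM. Qed.
Lemma int2rat_sub m n (A B : 'M[int]_(m, n)) :
  int2rat_mx (A - B) = int2rat_mx A - int2rat_mx B.
Proof. by rewrite /int2rat_mx map_mxB. Qed.

Lemma int2rat_unit D (A : 'M[int]_D) : \det A != 0 -> int2rat_mx A \in unitmx.
Proof.
by move=> dA; rewrite unitmxE /int2rat_mx det_map_mx /= unitfE intr_eq0.
Qed.

Lemma rem_exists D (A : 'M[int]_D) (m : 'cV[int]_D) :
  \det A != 0 -> exists r, is_rem A m r.
Proof.
move=> dA; have uA := int2rat_unit dA.
pose x := invmx (int2rat_mx A) *m int2rat_mx m.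
pose y := \col_i Num.floor (x i 0).
exists (m - A *m y); split; last first.
  by exists y; rewrite opprB addrC subrK.
exists (x - int2rat_mx y); split.
  by rewrite int2rat_sub int2rat_mul mulmxBr mulKVmx.
move=> i; have /andP[a b] := floor_itv (x i 0).
have -> : (x - int2rat_mx y) i 0 = x i 0 - (Num.floor (x i 0))%:~R.
  by rewrite !mxE.
rewrite intrD in b; split; lra.
Qed.

Lemma N_unique D (A : 'M[int]_D) (m m' : 'cV[int]_D) :
  \det A != 0 -> in_N A m -> in_N A m' -> in_lattice A (m - m') -> m = m'.
Proof.
move=> dA [x [hx bx]] [x' [hx' bx']] [z hz].
have uA := int2rat_unit dA.
have ez : int2rat_mx z = x - x'.
  apply: (can_inj (mulKmx uA)).
  by rewrite -int2rat_mul -hz int2rat_sub hx hx' mulmxBr.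
have z0 : z = 0.
  apply/matrixP=> i j; rewrite (ord1 j) mxE.
  move/matrixP: ez => /(_ i 0); rewrite !mxE => e.
  have [h1 h2] := bx i; have [h3 h4] := bx' i.
  have l1 : (z i 0)%:~R < (1%:~R : rat) by rewrite e; lra.
  have l2 : ((-1)%:~R : rat) < (z i 0)%:~R by rewrite e; lra.
  rewrite ltr_int in l1; rewrite ltr_int in l2; lia.
by apply/eqP; rewrite -subr_eq0 hz z0 mulmx0.
Qed.

Lemma lcrm_step D (A B X Y : 'M[int]_D) v :
  \det B != 0 -> A *m B = B *m A -> A *m X + B *m Y = 1%:M ->
  in_lattice A v -> in_lattice B v -> in_lattice (A *m B) v.
Proof.
move=> dB AB bez [a ->] hB.
have [z ->] := key dB AB bez hB.
by exists z; rewrite mulmxA.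
Qed.

Lemma lcrm_prod D L (M : 'I_L -> 'M[int]_D) (l : seq 'I_L) v :
  (forall i, \det (M i) != 0) ->
  (forall i j, M i *m M j = M j *m M i) ->
  (forall i j, i != j -> mx_coprime (M i) (M j)) ->
  uniq l -> (forall j, j \in l -> in_lattice (M j) v) ->
  in_lattice (prodmx [seq M j | j <- l]) v.
Proof.
move=> hns hc hcop; elim: l => [|k l IH] /=.
  by move=> _ _; exists v; rewrite mul1mx.
move=> /andP [kl ul] H.
rewrite /prodmx /= -/(prodmx _).
have [X [Y bez]] : exists X Y, M k *m X + prodmx [seq M j | j <- l] *m Y = 1%:M.
  apply: bez_prod => j jl; split; first exact: hc.
  apply: bezout; first exact: hns.
  apply: hcop; apply: contraNneq kl => ->; done.
apply: lcrm_step (det_prod _ hns) _ bez _ _.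
- by apply: comm_prod => j _; exact: hc.
- exact: H (mem_head _ _).
- by apply: IH => // j jl; apply: H; rewrite in_cons jl orbT.
Qed.

Unset Implicit Arguments.

Theorem theorem2 (D L : nat) (M : 'I_L -> 'M[int]_D) (U : 'M[int]_D) :
  (forall i, nonsingular (M i)) ->
  (forall i j, M i *m M j = M j *m M i) ->
  (forall i j, i != j -> mx_coprime (M i) (M j)) ->
  unimodular U ->
  let R := Pmx M *m U in
  (exists (What Q : 'I_L -> 'M[int]_D),
      forall i, Wmx M i *m What i + M i *m Q i = 1%:M) /\
  (forall (What Q : 'I_L -> 'M[int]_D),
      (forall i, Wmx M i *m What i + M i *m Q i = 1%:M) ->
      forall (m : 'cV[int]_D) (r : 'I_L -> 'cV[int]_D),
        in_N R m -> (forall i, is_rem (M i) m (r i)) ->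
        is_rem R (\sum_(i < L) Wmx M i *m What i *m r i) m) /\
  (forall (m m' : 'cV[int]_D), in_N R m -> in_N R m' ->
      (forall i r, is_rem (M i) m r -> is_rem (M i) m' r) -> m = m').
Proof.
move=> hns hc hcop hU R.
have uU := unimod_unit hU.
have latR : forall v, (forall j, in_lattice (M j) v) -> in_lattice R v.
  move=> v H; apply: lat_unit => //; rewrite /Pmx.
  by apply: lcrm_prod => //; rewrite enum_uniq.
have dR : \det R != 0.
  rewrite det_mulmx mulf_neq0 //; first exact: det_prod.
  by case: hU => ->.
split.
  have W : forall i, exists XY : 'M[int]_D * 'M[int]_D,
      Wmx M i *m XY.2 + M i *m XY.1 = 1%:M.
    move=> i.
    have [X [Y h]] : exists X Y, M i *m X +
        prodmx [seq M j | j <- [seq j <- enum 'I_L | j != i]] *m Y = 1%:M.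
      apply: bez_prod => j; rewrite mem_filter => /andP [ji _]; split.
        exact: hc.
      by apply: bezout; [exact: hns | apply: hcop; rewrite eq_sym].
    by exists (X, Y); rewrite addrC.
  have [f hf] := fin_all_exists W.
  by exists (fun i => (f i).2), (fun i => (f i).1).
split.
  move=> What Q hWQ m r hm hr; split => //.
  apply: latR => j.
  have [x hx] := (hr j).2.
  rewrite (bigD1 j) //= addrAC.
  apply: lat_add.
    have eW : Wmx M j *m What j = 1%:M - M j *m Q j by rewrite -(hWQ j) addrK.
    rewrite eW mulmxBl mul1mx.
    exists (- x - Q j *m r j).
    by rewrite mulmxBr mulmxN -hx mulmxA opprB addrAC.
  apply: lat_sum => i ij.
  have jin : j \in [seq k <- enum 'I_L | k != i] by rewrite mem_filter mem_enum eq_sym ij.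
  rewrite /Wmx; have [K ->] := prod_pull hc jin.
  by rewrite -!mulmxA; apply: lat_mul.
move=> m m' hm hm' H.
apply: (N_unique dR hm hm'); apply: latR => j.
have [r hr] := rem_exists m (hns j).
have hr' := H j r hr.
have -> : m - m' = (m - r) - (m' - r) by rewrite opprB addrA subrK.
exact: lat_add (hr.2) (lat_opp hr'.2).
Qed.
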